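(* For every $D \in \Omega_n$, $$ \big( \|D\|_{\mathcal{S}_2}^2 + n - 2 \big)^{1/2} \le r_{\mathcal{S}_2}(D) \le \big( \|D\|_{\mathcal{S}_2}^2 + n \big)^{1/2}. $$ Moreover, $\sup_{D\in\Omega_n}\Big| \dfrac{r_{\mathcal{S}_2}(D)^2}{\|D\|_{\mathcal{S}_2}^2 + n} - 1\Big| \to 0$ as $n\to\infty$.
   Context: $\Omega_n$ denotes the set of $n\times n$ doubly stochastic matrices (nonnegative real entries, all row and column sums equal to $1$). $\|\cdot\|_{\mathcal{S}_2}$ is the Frobenius norm $\|A\|_{\mathcal{S}_2}=\big(\sum_{i,j}a_{ij}^2\big)^{1/2}$. For $A\in M_n(\mathbb{R})$, $r_{\mathcal{S}_2}(A) := \max_{B\in\Omega_n}\|A-B\|_{\mathcal{S}_2}$ is the minimal radius of a bounding ball of $\Omega_n$ centered at $A$. *)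

(* Defs.v *)
From HB Require Import structures.
From mathcomp Require Import all_boot all_order all_algebra.
From mathcomp Require Import all_classical all_reals all_analysis.
Set Implicit Arguments. Unset Strict Implicit. Unset Printing Implicit Defensive.
Import Order.TTheory GRing.Theory Num.Theory.
Local Open Scope ring_scope.
Local Open Scope classical_set_scope.

Definition doubly_stochastic (R : realType) (n : nat) (B : 'M[R]_n) : Prop :=
  (forall i j, 0 <= B i j) /\
  (forall i, \sum_(j < n) B i j = 1) /\
  (forall j, \sum_(i < n) B i j = 1).

Definition frob (R : realType) (n : nat) (A : 'M[R]_n) : R :=
  Num.sqrt (\sum_(i < n) \sum_(j < n) A i j ^+ 2).

(* r_{S_2}(A) = max_{B in Omega_n} ||A - B||_{S_2}, written as a supremum
   (the max is attained since Omega_n is compact) *)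
Definition rS2 (R : realType) (n : nat) (A : 'M[R]_n) : R :=
  sup [set x : R | exists B : 'M[R]_n, doubly_stochastic B /\ x = frob (A - B)].

Definition ratio_dev (R : realType) (n : nat) : R :=
  sup [set x : R | exists D : 'M[R]_n, doubly_stochastic D /\
         x = `| rS2 D ^+ 2 / (frob D ^+ 2 + n%:R) - 1 |].

(* Main.v *)
Require Import Defs.
From HB Require Import structures.
From mathcomp Require Import all_boot all_order all_algebra.
From mathcomp Require Import all_classical all_reals all_analysis.
From mathcomp Require Import ring lra zify.
Import Order.TTheory GRing.Theory Num.Theory.
Import numFieldNormedType.Exports.
Local Open Scope ring_scope.
Local Open Scope classical_set_scope.

Set Implicit Arguments.
Section S.
Variable R : realType.

Definition ss n (A : 'M[R]_n) := \sum_(i < n) \sum_(j < n) A i j ^+ 2.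
Definition ip n (A B : 'M[R]_n) := \sum_(i < n) \sum_(j < n) A i j * B i j.

Lemma ss_ge0 n (A : 'M[R]_n) : 0 <= ss A.
Proof. by apply: sumr_ge0 => i _; apply: sumr_ge0 => j _; exact: sqr_ge0. Qed.

Lemma frob2 n (A : 'M[R]_n) : frob A ^+ 2 = ss A.
Proof. by rewrite /frob sqr_sqrtr // ss_ge0. Qed.

Lemma ss_sub n (A B : 'M[R]_n) : ss (A - B) = ss A + ss B - 2 * ip A B.
Proof.
rewrite /ss /ip mulr_sumr -sumrN -!big_split /=; apply: eq_bigr => i _.
rewrite mulr_sumr -sumrN -!big_split /=; apply: eq_bigr => j _.
rewrite !mxE; ring.
Qed.

Lemma ds_le1 n (B : 'M[R]_n) : doubly_stochastic B -> forall i j, B i j <= 1.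
Proof.
move=> [H0 [Hr Hc]] i j; rewrite -(Hr i) (bigD1 j) //= lerDl.
by apply: sumr_ge0 => k _.
Qed.

Lemma ds_sum n (B : 'M[R]_n) : doubly_stochastic B ->
  \sum_(i < n) \sum_(j < n) B i j = n%:R.
Proof.
move=> [H0 [Hr Hc]]; under eq_bigr => i _ do rewrite Hr.
by rewrite sumr_const card_ord.
Qed.

Lemma ss_ds n (B : 'M[R]_n) : doubly_stochastic B -> ss B <= n%:R.
Proof.
move=> HB; rewrite -(ds_sum HB); apply: ler_sum => i _; apply: ler_sum => j _.
have h0 := (HB.1 i j); have h1 := ds_le1 HB i j.
rewrite expr2; nra.
Qed.

Lemma ip_ge0 n (A B : 'M[R]_n) : doubly_stochastic A -> doubly_stochastic B ->
  0 <= ip A B.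
Proof.
move=> HA HB; apply: sumr_ge0 => i _; apply: sumr_ge0 => j _.
exact: mulr_ge0 (HA.1 i j) (HB.1 i j).
Qed.

Lemma upper_elt n (D B : 'M[R]_n) : doubly_stochastic D -> doubly_stochastic B ->
  frob (D - B) <= Num.sqrt (frob D ^+ 2 + n%:R).
Proof.
move=> HD HB; rewrite /frob ler_sqrt; last by rewrite addr_ge0 // sqr_ge0.
rewrite -/(ss (D - B)) -/(ss D) frob2 ss_sub.
have := ss_ds HB; have := ip_ge0 HD HB; lra.
Qed.

Definition cyc m (k : 'I_m.+1) : 'M[R]_m.+1 := \matrix_(i, j) ((j == i + k)%:R).

Lemma cyc_ds m (k : 'I_m.+1) : doubly_stochastic (cyc k).
Proof.
split; first by move=> i j; rewrite mxE ler0n.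
split.
- move=> i; rewrite (bigD1 (i + k)) //= big1 ?mxE ?eqxx ?addr0 // => j /negbTE Hj.
  by rewrite mxE Hj.
- move=> j; rewrite (bigD1 (j - k)) //= big1 ?mxE ?subrK ?eqxx ?addr0 // => i Hi.
  rewrite mxE; case: eqP => // Hj; move: Hi; by rewrite Hj addrK eqxx.
Qed.

Lemma ss_cyc m (k : 'I_m.+1) : ss (cyc k) = m.+1%:R.
Proof.
have := ds_sum (cyc_ds k) => <-; apply: eq_bigr => i _; apply: eq_bigr => j _.
by rewrite mxE; case: eqP; rewrite ?expr0n ?expr1n.
Qed.

Lemma ip_cyc m (D : 'M[R]_m.+1) k : ip D (cyc k) = \sum_i D i (i + k).
Proof.
apply: eq_bigr => i _; rewrite (bigD1 (i + k)) //= big1 ?mxE ?eqxx ?mulr1 ?addr0 //.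
by move=> j /negbTE Hj; rewrite mxE Hj mulr0.
Qed.

Lemma exists_cyc m (D : 'M[R]_m.+1) : doubly_stochastic D ->
  exists k, ip D (cyc k) <= 1.
Proof.
move=> HD; have Hs : \sum_k ip D (cyc k) = m.+1%:R.
  under eq_bigr => k _ do rewrite ip_cyc.
  rewrite exchange_big /= -(ds_sum HD); apply: eq_bigr => i _.
  by rewrite [RHS](reindex_inj (addrI i)).
apply: contrapT => /forallNP H.
have : \sum_(k < m.+1) (1 : R) < \sum_k ip D (cyc k).
  apply: ltr_sum; first by apply/hasP; exists ord0; rewrite ?mem_index_enum.
  by move=> k _; rewrite ltNge; apply/negP/H.
by rewrite Hs sumr_const card_ord ltxx.
Qed.

Lemma rS2_bounds n (D : 'M[R]_n) : doubly_stochastic D ->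
  Num.sqrt (frob D ^+ 2 + n%:R - 2) <= rS2 D /\
  rS2 D <= Num.sqrt (frob D ^+ 2 + n%:R).
Proof.
move=> HD.
set S := [set x : R | exists B : 'M[R]_n, doubly_stochastic B /\ x = frob (D - B)].
have ub : ubound S (Num.sqrt (frob D ^+ 2 + n%:R)).
  by move=> x [B [HB ->]]; exact: upper_elt.
have ne : S !=set0 by exists (frob (D - D)), D.
have hs : has_sup S by split => //; exists (Num.sqrt (frob D ^+ 2 + n%:R)).
have le_sup : forall B, doubly_stochastic B -> frob (D - B) <= rS2 D.
  by move=> B HB; apply: sup_upper_bound => //; exists B.
split; last exact: ge_sup.
case: n D HD S ub ne hs le_sup => [|m] D HD S ub ne hs le_sup.
  rewrite ler0_sqrtr; last by rewrite frob2 /ss big_ord0; lra.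
  apply: le_trans (le_sup D HD); exact: sqrtr_ge0.
have [k Hk] := exists_cyc HD.
apply: le_trans (le_sup _ (cyc_ds k)).
rewrite /frob ler_sqrt; last exact: ss_ge0.
rewrite -/(ss (D - cyc k)) ss_sub ss_cyc frob2; lra.
Qed.

Lemma elt_bound m (D : 'M[R]_m.+1) : doubly_stochastic D ->
  `| rS2 D ^+ 2 / (frob D ^+ 2 + m.+1%:R) - 1 | <= 2 / m.+1%:R.
Proof.
move=> HD; have [h1 h2] := rS2_bounds HD.
set F := frob D ^+ 2 in h1 h2 *; set r := rS2 D in h1 h2 *.
set N : R := m.+1%:R in h1 h2 *.
have F0 : 0 <= F by rewrite /F sqr_ge0.
have N1 : 1 <= N by rewrite /N ler1n.
set c := F + N.
have c0 : 0 < c by rewrite /c; lra.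
have r0 : 0 <= r by apply: le_trans h1; exact: sqrtr_ge0.
have hu : r ^+ 2 <= c.
  have s0 := sqrtr_ge0 c; have := sqr_sqrtr (ltW c0); rewrite /c => <-.
  rewrite !expr2; nra.
have hl : c - 2 <= r ^+ 2.
  case: (lerP 0 (F + N - 2)) => H.
    have s0 := sqrtr_ge0 (F + N - 2); have := sqr_sqrtr H => e.
    rewrite /c -e !expr2; nra.
  by have := sqr_ge0 r; rewrite /c; lra.
set y := r ^+ 2 / c.
have ey : r ^+ 2 = y * c by rewrite /y divfK // gt_eqF.
set t := 2 / N.
have et : t * N = 2 by rewrite /t divfK // gt_eqF // (lt_le_trans ltr01).
rewrite ler_norml; apply/andP; split.
  have : (y - 1) * c >= -2 by lra.
  have : (y - 1) * c <= 0 by lra.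
  rewrite /c => h3 h4.
  have y1 : y - 1 <= 0.
    by rewrite -(pmulr_lle0 _ c0).
  have : (y - 1) * F <= 0 by rewrite mulr_le0_ge0.
  move=> h5; have : 0 <= (y - 1 + t) * N by nra.
  rewrite pmulr_lge0 ?(lt_le_trans ltr01) //; lra.
have : (y - 1) * c <= 0 by lra.
move=> h3; have t0 : 0 <= t by rewrite /t divr_ge0 // ler0n.
nra.
Qed.

Lemma ratio_bound m : 0 <= ratio_dev R m.+1 <= 2 / m.+1%:R.
Proof.
set S := [set x : R | exists D : 'M[R]_m.+1, doubly_stochastic D /\
         x = `| rS2 D ^+ 2 / (frob D ^+ 2 + m.+1%:R) - 1 |].
have ub : ubound S (2 / m.+1%:R) by move=> x [D [HD ->]]; exact: elt_bound.
have ne : S !=set0 by eexists; exists (cyc ord0); split; first exact: cyc_ds.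
have hs : has_sup S by split => //; exists (2 / m.+1%:R).
apply/andP; split; last exact: ge_sup.
have [x Sx] := ne; apply: le_trans (sup_upper_bound hs Sx).
by case: Sx => D [_ ->].
Qed.

End S.

Lemma bnd_all (R : realType) n : (0 < n)%N ->
  0 <= ratio_dev R n <= 4 * (@harmonic R n).
Proof.
case: n => [//|m] _.
have /andP[a b] := ratio_bound R m.
apply/andP; split => //; apply: le_trans b _.
rewrite /harmonic /=.
have p : (0 : R) < m.+1%:R by rewrite ltr0n.
have p2 : (0 : R) < m.+2%:R by rewrite ltr0n.
rewrite ler_pdivrMr // mulrAC ler_pdivlMr //.
rewrite -!natrM ler_nat; lia.
Qed.

Lemma cvg_part (R : realType) : ratio_dev R n @[n --> \oo] --> (0 : R).
Proof.
have h : (fun n => 4 * (@harmonic R n)) @ \oo --> (0:R).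
  have := cvgM (cvg_cst (4:R)) (@cvg_harmonic R); rewrite mulr0 => H; exact: H.
apply: (squeeze_cvgr _ (cvg_cst 0) h).
near=> n; apply: bnd_all.
near: n; exists 1%N => //.
Unshelve. all: end_near.
Qed.

Theorem mainTheorem4 (R : realType) :
  (forall (n : nat) (D : 'M[R]_n), doubly_stochastic D ->
     Num.sqrt (frob D ^+ 2 + n%:R - 2) <= rS2 D /\
     rS2 D <= Num.sqrt (frob D ^+ 2 + n%:R)) /\
  (ratio_dev R n @[n --> \oo] --> (0 : R)).
Proof.
split; last exact: cvg_part.
by move=> n D HD; apply: rS2_bounds.
Qed.
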